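(* Let $W$ be a nonnegative, integer-valued random variable with $\mathbb{P}(W=0)=p$. If $W$ has increasing failure rate (IFR), then $$d_{TV}(\mathcal{L}(W),\mathrm{Geom}(p))\leq 1-p(1+\mathbb{E}W).$$
   Context: The failure rate of $W$ is $r_W(j)=\mathbb{P}(W=j)/\mathbb{P}(W>j)$, $j\in\{0,1,2,\ldots\}$; $W$ is IFR if $r_W(j)$ is nondecreasing in $j$. $\mathrm{Geom}(p)$ is the distribution with mass $p(1-p)^k$ at $k=0,1,2,\ldots$. $d_{TV}(\mathcal{L}(U),\mathcal{L}(V))=\sup_{A\subseteq\{0,1,2,\ldots\}}|\mathbb{P}(U\in A)-\mathbb{P}(V\in A)|$. *)

(* Defs.v *)
(* The law of a nonnegative integer-valued random
   variable is represented by its probability mass function f : nat -> R. *)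
From HB Require Import structures.
From mathcomp Require Import all_boot all_order all_algebra.
From mathcomp Require Import all_classical all_reals all_analysis.
Set Implicit Arguments. Unset Strict Implicit. Unset Printing Implicit Defensive.
Import Order.TTheory GRing.Theory Num.Theory.
Local Open Scope classical_set_scope.
Local Open Scope ring_scope.
Local Open Scope ereal_scope.

Section Defs.
Variable R : realType.

Definition is_pmf (f : nat -> R) : Prop :=
  (forall k, (0 <= f k)%R) /\ \esum_(k in [set: nat]) (f k)%:E = 1.

Definition probA (f : nat -> R) (A : set nat) : \bar R :=
  \esum_(k in A) (f k)%:E.

Definition expect (f : nat -> R) : \bar R :=
  \esum_(k in [set: nat]) ((k%:R * f k)%R)%:E.

Definition tailP (f : nat -> R) (j : nat) : \bar R :=
  probA f [set k | (j < k)%N].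

(* failure rate r_W(j) = P(W=j)/P(W>j), with the convention x/0 = +oo *)
Definition failure_rate (f : nat -> R) (j : nat) : \bar R :=
  if tailP f j == 0 then +oo else ((f j / fine (tailP f j))%R)%:E.

Definition IFR (f : nat -> R) : Prop :=
  forall i j : nat, (i <= j)%N -> failure_rate f i <= failure_rate f j.

Definition geom_pmf (p : R) (k : nat) : R := (p * (1 - p) ^+ k)%R.

Definition dTV (f g : nat -> R) : \bar R :=
  ereal_sup [set `|probA f A - probA g A| | A in [set: set nat]].

End Defs.

(* Main.v *)
Require Import Defs.
From HB Require Import structures.
From mathcomp Require Import all_boot all_order all_algebra.
From mathcomp Require Import all_classical all_reals all_analysis.
From mathcomp Require Import ring lra.
Import Order.TTheory GRing.Theory Num.Theory.
Local Open Scope classical_set_scope.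
Local Open Scope ring_scope.
Local Open Scope ereal_scope.

Section S.
Variable R : realType.
Variable f : nat -> R.
Hypothesis f0 : forall k, (0 <= f k)%R.
Hypothesis f1 : \esum_(k in [set: nat]) (f k)%:E = 1.

Let F n : R := (\sum_(0 <= k < n) f k)%R.

Lemma ser1 : \sum_(k <oo) (f k)%:E = 1.
Proof. by rewrite nneseries_esumT // => n; rewrite lee_fin. Qed.

Lemma F_le1 n : (F n <= 1)%R.
Proof.
rewrite -lee_fin -ser1 /F -sumEFin.
by apply: nneseries_lim_ge => i _; rewrite lee_fin.
Qed.

Lemma tailE j : tailP f j = (1 - F j.+1)%:E.
Proof.
have h := ser1.
rewrite (nneseries_split 0 j.+1) ?add0n in h; last by move=> k _; rewrite lee_fin.
rewrite eseries_cond in h; rewrite /tailP /probA.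
have -> : [set k | (j < k)%N] = [set x : nat | true && (j < x)%N] by [].
rewrite -nneseries_esum; last by move=> k _; rewrite lee_fin.
rewrite EFinB -h /F -sumEFin.
by rewrite addeAC subee ?add0e // sumEFin.
Qed.
Let T n : R := (1 - F n)%R.

Lemma FS n : F n.+1 = (F n + f n)%R.
Proof. by rewrite /F big_nat_recr. Qed.

Lemma p_le1 : (f 0%N <= 1)%R.
Proof. by have := F_le1 1; rewrite /F big_nat1. Qed.

Lemma frE j : failure_rate f j =
  if (1 - F j.+1 == 0)%R then +oo else ((f j / (1 - F j.+1))%R)%:E.
Proof. by rewrite /failure_rate tailE eqe. Qed.

Lemma hazard (hI : IFR f) j : (f 0%N * T j <= f j)%R.
Proof.
have S0 := F_le1 j.+1.
have p1 := p_le1.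
have fj := f0 j.
have p0 := f0 0%N.
rewrite /T -[F j](addrK (f j)) -FS.
have := hI 0%N j isT; rewrite !frE.
have -> : F 1 = f 0%N by rewrite /F big_nat1.
have [Sj|Sj] := eqVneq (1 - F j.+1)%R 0%R.
  move=> _; rewrite opprD addrA Sj add0r opprK.
  nra.
have [S0'|S0'] := eqVneq (1 - f 0%N)%R 0%R; first by rewrite leye_eq.
rewrite lee_fin.
have Sp : (0 < 1 - F j.+1)%R by rewrite lt0r Sj subr_ge0.
have Sp0 : (0 < 1 - f 0%N)%R by rewrite lt0r S0' subr_ge0.
rewrite ler_pdivrMr // mulrAC ler_pdivlMr //.
nra.
Qed.
Lemma T0 : T 0 = 1%R.
Proof. by rewrite /T /F big_geq // subr0. Qed.

Lemma TS n : T n.+1 = (T n - f n)%R.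
Proof. by rewrite /T FS opprD addrA. Qed.

Lemma T_ge0 n : (0 <= T n)%R.
Proof. by rewrite /T subr_ge0 F_le1. Qed.

Lemma T_geom (hI : IFR f) k : (T k <= (1 - f 0%N) ^+ k)%R.
Proof.
elim: k => [|k IH]; first by rewrite T0 expr0.
rewrite TS exprS.
have h := hazard hI k.
have p1 := p_le1.
have Tk := T_ge0 k.
apply: (le_trans (y := ((1 - f 0%N) * T k)%R)); first nra.
by apply: ler_wpM2l => //; rewrite subr_ge0.
Qed.

Lemma G_sum n : (\sum_(0 <= k < n) geom_pmf (f 0%N) k = 1 - (1 - f 0%N) ^+ n)%R.
Proof.
elim: n => [|n IH]; first by rewrite big_geq // expr0 subrr.
rewrite big_nat_recr //= IH /geom_pmf exprS.
ring.
Qed.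

Lemma M_id n : (\sum_(0 <= k < n) (f k + k%:R * f k) + n%:R * T n
   = \sum_(0 <= k < n) T k)%R.
Proof.
elim: n => [|n IH]; first by rewrite !big_geq // mul0r addr0.
rewrite !big_nat_recr //= -IH TS -natr1.
ring.
Qed.

Lemma main_fin (hI : IFR f) (a : pred nat) n :
  let p := f 0%N in
  let M := (\sum_(0 <= k < n) (f k + k%:R * f k))%R in
  let PfA := (\sum_(0 <= k < n | a k) f k)%R in
  let PgA := (\sum_(0 <= k < n | a k) geom_pmf p k)%R in
  (PfA + p * M <= PgA + 1)%R /\ (PgA + p * M <= PfA + 1)%R.
Proof.
move=> p M PfA PgA.
have p0 : (0 <= p)%R by apply: f0.
have p1 : (p <= 1)%R by apply: p_le1.
have hM : (p * M <= \sum_(0 <= k < n) p * T k)%R.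
  rewrite -mulr_sumr; apply: ler_wpM2l => //; rewrite -M_id lerDl.
  by apply: mulr_ge0 => //; apply: T_ge0.
have hg k : (p * T k <= geom_pmf p k)%R.
  by rewrite /geom_pmf; apply: ler_wpM2l => //; apply: T_geom.
have hf k : (p * T k <= f k)%R by apply: hazard.
have Fn := F_le1 n.
have Gn : (\sum_(0 <= k < n) geom_pmf p k <= 1)%R.
  rewrite G_sum lerBlDr lerDl; apply: exprn_ge0; rewrite subr_ge0 //.
split.
- have : (PfA + \sum_(0 <= k < n) p * T k <= PgA + F n)%R.
    rewrite /PfA /PgA /F (big_mkcond a) (big_mkcond a) /= -!big_split /=.
    apply: ler_sum => k _; have := hf k; have := hg k; case: (a k) => /=; lra.
  lra.
- have : (PgA + \sum_(0 <= k < n) p * T k <= PfA + \sum_(0 <= k < n) geom_pmf p k)%R.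
    rewrite /PfA /PgA (big_mkcond a) (big_mkcond a) /= -!big_split /=.
    apply: ler_sum => k _; have := hf k; have := hg k; case: (a k) => /=; lra.
  lra.
Qed.
End S.

Lemma ser_le (R : realType) (u : nat -> R) (P : pred nat) (c : \bar R) :
  (forall k, (0 <= u k)%R) ->
  (forall n, ((\sum_(0 <= k < n | P k) u k)%R)%:E <= c) ->
  \sum_(k <oo | P k) (u k)%:E <= c.
Proof.
move=> u0 h; apply: lime_le.
  by apply: is_cvg_nneseries => k _ _; rewrite lee_fin.
by apply: nearW => n; rewrite sumEFin.
Qed.

Lemma probA_ser (R : realType) (u : nat -> R) (A : set nat) :
  (forall k, (0 <= u k)%R) ->
  probA u A = \sum_(k <oo | k \in A) (u k)%:E.
Proof.
move=> u0; rewrite nneseries_esum; last by move=> k _; rewrite lee_fin.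
by rewrite set_mem_set.
Qed.

Theorem corollary2p1 (R : realType) (f : nat -> R) (p : R) :
  is_pmf f -> f 0%N = p -> IFR f ->
  dTV f (geom_pmf p) <= 1 - p%:E * (1 + expect f).
Proof.
move=> [f0 f1] fp hI.
have p0 : (0 <= p)%R by rewrite -fp; apply: f0.
have p1 : (p <= 1)%R by rewrite -fp; exact: (@p_le1 R f f0 f1).
have g0 k : (0 <= geom_pmf p k)%R.
  by rewrite /geom_pmf mulr_ge0 // exprn_ge0 // subr_ge0.
set E' := \sum_(k <oo) ((f k + k%:R * f k)%R)%:E.
have hE : 1 + expect f = E'.
  rewrite /E' /expect -nneseries_esumT; last by move=> k; rewrite lee_fin mulr_ge0.
  rewrite -(@ser1 R f f0 f1) -nneseriesD; last 2 first.
  - by move=> k _ _; rewrite lee_fin.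
  - by move=> k _ _; rewrite lee_fin mulr_ge0.
  done.
have E0 : 0 <= E'.
  by apply: nneseries_ge0 => k _ _; rewrite lee_fin addr_ge0 // mulr_ge0.
rewrite hE.
apply: ge_ereal_sup => _ [A _ <-].
rewrite !probA_ser //.
set a : pred nat := fun k => k \in A.
set Lf := \sum_(k <oo | k \in A) (f k)%:E.
set Lg := \sum_(k <oo | k \in A) (geom_pmf p k)%:E.
set Q := p%:E * E'.
have Q0 : 0 <= Q by rewrite mule_ge0.
have eqS (u : nat -> R) : (forall k, (0 <= u k)%R) ->
    \sum_(k <oo) ((if a k then u k else 0) + p * (f k + k%:R * f k))%R%:E
    = \sum_(k <oo | k \in A) (u k)%:E + Q.
  move=> u0.
  rewrite [X in _ = X + _]eseries_mkcond /Q /E' -nneseriesZl; last first.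
    by move=> k _; rewrite lee_fin addr_ge0 // mulr_ge0.
  rewrite -nneseriesD; last 2 first.
  - by move=> k _ _; case: ifP; rewrite // lee_fin.
  - by move=> k _ _; rewrite -EFinM lee_fin mulr_ge0 // addr_ge0 // mulr_ge0.
  apply: congr_lim; apply/funext => n; apply: eq_bigr => k _.
  by rewrite /a; case: ifP; rewrite /= ?add0r ?add0e EFinD EFinM.
have ge0h (u : nat -> R) : (forall k, (0 <= u k)%R) -> forall k,
    (0 <= (if a k then u k else 0) + p * (f k + k%:R * f k))%R.
  move=> u0 k; apply: addr_ge0; first by case: ifP.
  by rewrite mulr_ge0 // addr_ge0 // mulr_ge0.
have Lg_ge n : ((\sum_(0 <= k < n | a k) geom_pmf p k)%R)%:E <= Lg.
  by rewrite -sumEFin; apply: nneseries_lim_ge => k _ _; rewrite lee_fin.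
have Lf_ge n : ((\sum_(0 <= k < n | a k) f k)%R)%:E <= Lf.
  by rewrite -sumEFin; apply: nneseries_lim_ge => k _ _; rewrite lee_fin.
have hi : Lf + Q <= Lg + 1.
  rewrite -eqS //; apply: ser_le; first exact: ge0h.
  move=> n; have [h _] := @main_fin R f f0 f1 hI a n; rewrite fp in h.
  rewrite big_split /= -big_mkcond /= -mulr_sumr.
  apply: (@le_trans _ _ ((\sum_(0 <= k < n | a k) geom_pmf p k + 1)%R%:E)); first by rewrite lee_fin.
  by rewrite EFinD leeD2r.
have hii : Lg + Q <= Lf + 1.
  rewrite -eqS //; apply: ser_le; first exact: ge0h.
  move=> n; have [_ h] := @main_fin R f f0 f1 hI a n; rewrite fp mulr_sumr in h.
  rewrite big_split /= -big_mkcond /=.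
  apply: (@le_trans _ _ ((\sum_(0 <= k < n | a k) f k + 1)%R%:E)).
    by rewrite lee_fin; move: h; rewrite /geom_pmf.
  by rewrite EFinD leeD2r.
have Lf1 : Lf <= 1.
  apply: ser_le => // n.
  rewrite lee_fin (le_trans _ (@F_le1 R f f0 f1 n)) //.
  rewrite big_mkcond /=; apply: ler_sum => k _; case: ifP => //.
have Lf0 : 0 <= Lf by apply: nneseries_ge0 => k _ _; rewrite lee_fin.
have Lg0 : 0 <= Lg by apply: nneseries_ge0 => k _ _; rewrite lee_fin.
have Lffin : Lf \is a fin_num.
  by rewrite ge0_fin_numE // (le_lt_trans Lf1) // ltey.
have Lgfin : Lg \is a fin_num.
  rewrite ge0_fin_numE // (le_lt_trans (y := Lf + 1)) //; last first.
    by rewrite -(fineK Lffin) -EFinD ltey.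
  by apply: le_trans hii; rewrite leeDl.
have Qfin : Q \is a fin_num.
  rewrite ge0_fin_numE // (le_lt_trans (y := Lg + 1)) //; last first.
    by rewrite -(fineK Lgfin) -EFinD ltey.
  by apply: le_trans hi; rewrite leeDr.
move: hi hii Lf0 Lg0 Q0 Lf1.
rewrite -(fineK Lffin) -(fineK Lgfin) -(fineK Qfin).
move: (fine Lf) (fine Lg) (fine Q) => x y z.
rewrite -[x%:E - y%:E]EFinB abse_EFin -[1 - z%:E]EFinB lee_fin.
move=> h1 h2 h3 h4 h5 h6.
have k1 : (x + z <= y + 1)%R by rewrite -lee_fin.
have k2 : (y + z <= x + 1)%R by rewrite -lee_fin.
rewrite lee_fin in h5.
rewrite lee_fin ler_norml; apply/andP; split; lra.
Qed.
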